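(* Let $\alpha>0$ and let $u:[0,1]\to\mathbb R$ be any function with $u(0)=u(1)=0$ satisfying $u(1-x)+(1-x)^\alpha u\!\left(\tfrac{y}{1-x}\right)=u(y)+(1-y)^\alpha u\!\left(\tfrac{1-x-y}{1-y}\right)$ for all $x,y\in[0,1)$ with $x+y\in[0,1]$. Then $u(x)=u(1-x)$ for all $x\in\mathbb Q\cap[0,1]$. *)

(* Defs.v *)
From Stdlib Require Export Reals.
Open Scope R_scope.

Definition is_rational (x : R) : Prop :=
  exists (p : Z) (q : positive), x = IZR p / IZR (Zpos q).

(* Main.v *)
Require Import Defs.
From Stdlib Require Import Reals.
From Stdlib Require Import Lra Lia.
Open Scope R_scope.

Fixpoint VV (al : R) (u : R -> R) (n : nat) : R :=
  match n with
  | O => 0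
  | S m => u (1 / INR (S m)) + Rpower (INR m / INR (S m)) al * VV al u m
  end.

Lemma VV1 al u : u 1 = 0 -> VV al u 1 = 0.
Proof. intro h. simpl. replace (1/1) with 1 by field. rewrite h. ring. Qed.

Lemma keyC (al : R) (u : R -> R) :
  u 1 = 0 ->
  (forall a y, 0 < a <= 1 -> 0 <= y < 1 -> y <= a ->
     u a + Rpower a al * u (y / a) = u y + Rpower (1 - y) al * u ((a - y) / (1 - y))) ->
  forall n k, (1 <= k < n)%nat ->
  VV al u n = u (INR k / INR n) + Rpower (INR k / INR n) al * VV al u k
              + Rpower (INR (n - k) / INR n) al * VV al u (n - k).
Proof.
  intros u1 E n.
  induction n as [n IHn] using (well_founded_induction Wf_nat.lt_wf).
  intros k Hk. induction k as [|k IHk].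
  - lia.
  - destruct (Nat.eq_dec k 0) as [->|Hk0].
    + destruct n as [|m]; [lia|].
      rewrite VV1 by exact u1.
      replace (S m - 1)%nat with m by lia.
      change (VV al u (S m)) with
        (u (1 / INR (S m)) + Rpower (INR m / INR (S m)) al * VV al u m).
      simpl (INR 1). ring.
    + assert (IHk' := IHk ltac:(lia)).
      set (j := (n - S k)%nat).
      assert (Hnk : (n - k = S j)%nat) by (unfold j; lia).
      rewrite Hnk in IHk'.
      change (VV al u (S j)) with
        (u (1 / INR (S j)) + Rpower (INR j / INR (S j)) al * VV al u j) in IHk'.
      assert (HS := IHn (S k) ltac:(lia) k ltac:(lia)).
      replace (S k - k)%nat with 1%nat in HS by lia.
      rewrite VV1 in HS by exact u1.
      rewrite HS.
      assert (Hn : INR n = INR k + 1 + INR j).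
      { unfold j. rewrite minus_INR by lia. rewrite S_INR. ring. }
      assert (Kp : 1 <= INR k). { apply (le_INR 1). lia. }
      assert (Jp : 1 <= INR j). { apply (le_INR 1). unfold j. lia. }
      rewrite S_INR in *. rewrite Hn in *.
      set (K := INR k) in *. set (J := INR j) in *.
      assert (Eq := E ((K + 1) / (K + 1 + J)) (K / (K + 1 + J))).
      assert (Hpos : 0 < K + 1 + J) by lra.
      assert (A1 : 0 < (K + 1) / (K + 1 + J) <= 1).
      { split. apply Rdiv_lt_0_compat; lra.
        apply Rmult_le_reg_r with (K+1+J); [lra|]. field_simplify; lra. }
      assert (A2 : 0 <= K / (K + 1 + J) < 1).
      { split. apply Rlt_le, Rdiv_lt_0_compat; lra.
        apply Rmult_lt_reg_r with (K+1+J); [lra|]. field_simplify; lra. }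
      assert (A3 : K / (K + 1 + J) <= (K + 1) / (K + 1 + J)).
      { apply Rmult_le_reg_r with (K+1+J); [lra|]. field_simplify; lra. }
      specialize (Eq A1 A2 A3).
      replace (K / (K + 1 + J) / ((K + 1) / (K + 1 + J))) with (K / (K + 1)) in Eq
        by (field; lra).
      replace (((K + 1) / (K + 1 + J) - K / (K + 1 + J)) / (1 - K / (K + 1 + J)))
        with (1 / (J + 1)) in Eq by (field; lra).
      replace (1 - K / (K + 1 + J)) with ((J + 1) / (K + 1 + J)) in Eq by (field; lra).
      replace (K + 1 + J - (K + 1)) with J by ring.
      replace (K + 1 + J - K) with (J + 1) in IHk' by ring.
      replace (Rpower (K / (K + 1 + J)) al) with
        (Rpower ((K + 1) / (K + 1 + J)) al * Rpower (K / (K + 1)) al) in IHk'.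
      2:{ rewrite Rpower_mult_distr. f_equal. field; lra.
          apply Rdiv_lt_0_compat; lra. apply Rdiv_lt_0_compat; lra. }
      replace (Rpower (J / (K + 1 + J)) al) with
        (Rpower ((J + 1) / (K + 1 + J)) al * Rpower (J / (J + 1)) al).
      2:{ rewrite Rpower_mult_distr. f_equal. field; lra.
          apply Rdiv_lt_0_compat; lra. apply Rdiv_lt_0_compat; lra. }
      rewrite IHk'.
      assert (E2 : u ((K + 1) / (K + 1 + J)) = u (K / (K + 1 + J))
        + Rpower ((J + 1) / (K + 1 + J)) al * u (1 / (J + 1))
        - Rpower ((K + 1) / (K + 1 + J)) al * u (K / (K + 1))) by lra.
      rewrite E2. ring.
Qed.

Theorem propositionC2 (alpha : R) (u : R -> R) :
  0 < alpha ->
  u 0 = 0 -> u 1 = 0 ->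
  (forall x y : R, 0 <= x < 1 -> 0 <= y < 1 -> 0 <= x + y <= 1 ->
     u (1 - x) + Rpower (1 - x) alpha * u (y / (1 - x))
     = u y + Rpower (1 - y) alpha * u ((1 - x - y) / (1 - y))) ->
  forall x : R, is_rational x -> 0 <= x <= 1 -> u x = u (1 - x).
Proof.
  intros Hal u0 u1 H x [p [q Hx]] Hx01.
  assert (E : forall a y, 0 < a <= 1 -> 0 <= y < 1 -> y <= a ->
     u a + Rpower a alpha * u (y / a) = u y + Rpower (1 - y) alpha * u ((a - y) / (1 - y))).
  { intros a y Ha Hy Hya. assert (W := H (1 - a) y ltac:(lra) Hy ltac:(lra)).
    replace (1 - (1 - a)) with a in W by ring.
    replace (1 - (1 - a) - y) with (a - y) in W by ring. exact W. }
  set (n := Pos.to_nat q).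
  assert (Hq : IZR (Z.pos q) = INR n).
  { unfold n. rewrite INR_IZR_INZ. f_equal. lia. }
  assert (Hnp : (0 < n)%nat) by (unfold n; lia).
  assert (HnR : 0 < INR n) by (apply lt_0_INR; lia).
  rewrite Hq in Hx.
  assert (Hp0 : (0 <= p)%Z).
  { apply le_IZR. assert (IZR p = x * INR n) by (rewrite Hx; field; lra). nra. }
  set (k := Z.to_nat p).
  assert (Hk : IZR p = INR k).
  { unfold k. rewrite INR_IZR_INZ. f_equal. lia. }
  rewrite Hk in Hx.
  assert (Hkn : (k <= n)%nat).
  { apply INR_le. assert (INR k = x * INR n) by (rewrite Hx; field; lra). nra. }
  destruct (Nat.eq_dec k 0) as [Hk0|Hk0].
  { rewrite Hx, Hk0. simpl (INR 0). replace (0 / INR n) with 0 by (field; lra).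
    replace (1 - 0) with 1 by ring. congruence. }
  destruct (Nat.eq_dec k n) as [Hkn'|Hkn'].
  { rewrite Hx, Hkn'. replace (INR n / INR n) with 1 by (field; lra).
    replace (1 - 1) with 0 by ring. congruence. }
  assert (C1 := keyC alpha u u1 E n k ltac:(lia)).
  assert (C2 := keyC alpha u u1 E n (n - k) ltac:(lia)).
  replace (n - (n - k))%nat with k in C2 by lia.
  replace (1 - x) with (INR (n - k) / INR n).
  2:{ rewrite Hx, minus_INR by lia. field; lra. }
  rewrite Hx. lra.
Qed.
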